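(* Let $\mathcal{M}=(\mathcal{S},\mathcal{A},\mathcal{P},r,\gamma)$ be a finite MDP with $|\mathcal{S}|=S$, $|\mathcal{A}|=A$, $\gamma\in[0,1)$. Let $\mathcal{F}=\mathbb{R}^{SA}$, let $\|\cdot\|$ be a strictly monotone norm on $\mathbb{R}^{SA}$ (i.e. $Q\geq Q'\geq0$ and $Q\ne Q'$ imply $\|Q\|>\|Q'\|$), let $\mu_0$ be a stationary policy and $f_0\in\mathbb{R}^{SA}$ with $T_{\mu_0}f_0\geq f_0$. Let $(f_k)$, $(\mu_k)$ be generated by Reliable Policy Iteration: for $k=0,1,2,\dots$, $$f_{k+1}\in\arg\max_{f\in\mathcal{F}}\ \|f-f_k\|\quad\text{subject to}\quad T_{\mu_k} f\geq f\geq f_k,$$ and $\mu_{k+1}$ is a deterministic policy greedy with respect to $f_{k+1}$. Then $f_{k+1}=Q_{\mu_k}$ for all $k\ge0$, $f_\infty:=\lim_{k\to\infty}f_k=Q_*$, and any deterministic policy $\mu_\infty$ greedy with respect to $f_\infty$ is optimal.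
   Context: Functions $\mathcal{S}\times\mathcal{A}\to\mathbb{R}$ are identified with vectors in $\mathbb{R}^{SA}$. A stationary policy is a map $\mu:\mathcal{S}\to\Delta(\mathcal{A})$; its Q-value function is $Q_\mu(s,a)=\mathbb{E}[\sum_{t\ge0}\gamma^t r(s_t,a_t)\mid s_0=s,a_0=a]$ with $s_{t+1}\sim\mathcal{P}(\cdot|s_t,a_t)$, $a_{t+1}\sim\mu(\cdot|s_{t+1})$. The Bellman operator is $T_\mu Q(s,a)=r(s,a)+\gamma\sum_{s',a'}\mathcal{P}(s'|s,a)\mu(a'|s')Q(s',a')$. $Q_*$ is the optimal Q-value function. A deterministic policy $\mu$ is greedy with respect to $f$ if $\mu(s)\in\arg\max_a f(s,a)$ for all $s$. Vector inequalities are coordinate-wise. *)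

(* Defs.v *)
From HB Require Import structures.
From mathcomp Require Import all_boot all_order all_algebra.
From mathcomp Require Import all_classical all_reals all_analysis.
Set Implicit Arguments. Unset Strict Implicit. Unset Printing Implicit Defensive.
Import Order.TTheory GRing.Theory Num.Theory.
Import numFieldNormedType.Exports.
Local Open Scope ring_scope.
Local Open Scope classical_set_scope.

Section MDP.
Variables (R : realType) (S A : finType).

Definition qfun := S -> A -> R.

Definition qadd (f g : qfun) : qfun := fun s a => f s a + g s a.
Definition qsub (f g : qfun) : qfun := fun s a => f s a - g s a.
Definition qscale (c : R) (f : qfun) : qfun := fun s a => c * f s a.
Definition qzero : qfun := fun _ _ => 0.
Definition qle (f g : qfun) : Prop := forall s a, f s a <= g s a.

(* A finite MDP: transition kernel P(s'|s,a) = P s a s', reward r, discount gamma *)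
Definition is_mdp (P : S -> A -> S -> R) (gamma : R) : Prop :=
  (forall s a s', 0 <= P s a s') /\ (forall s a, \sum_(s' : S) P s a s' = 1) /\
  0 <= gamma /\ gamma < 1.

(* stationary (randomized) policy: mu s a = mu(a|s) *)
Definition is_policy (mu : S -> A -> R) : Prop :=
  forall s, (forall a, 0 <= mu s a) /\ \sum_(a : A) mu s a = 1.

Definition detpol (d : S -> A) : S -> A -> R :=
  fun s a => if a == d s then 1 else 0.

Definition Pmu (P : S -> A -> S -> R) (mu : S -> A -> R) (g : qfun) : qfun :=
  fun s a => \sum_(s' : S) P s a s' * \sum_(a' : A) mu s' a' * g s' a'.

Definition Tmu (P : S -> A -> S -> R) (r : qfun) (gamma : R) (mu : S -> A -> R)
  (Q : qfun) : qfun :=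
  fun s a => r s a + gamma * Pmu P mu Q s a.

(* Q_mu(s,a) = E[sum_t gamma^t r(s_t,a_t) | s_0=s, a_0=a]
   = sum_t gamma^t (P_mu^t r)(s,a)   (E[r(s_t,a_t)] = (P_mu^t r)(s,a)). *)
Definition Qval (P : S -> A -> S -> R) (r : qfun) (gamma : R) (mu : S -> A -> R)
  : qfun :=
  fun s a => limn (fun n => \sum_(t < n) gamma ^+ t * iter t (Pmu P mu) r s a).

Definition Qstar (P : S -> A -> S -> R) (r : qfun) (gamma : R) : qfun :=
  fun s a => sup [set y | exists mu, is_policy mu /\ y = Qval P r gamma mu s a].

Definition greedy (d : S -> A) (f : qfun) : Prop :=
  forall s a, f s a <= f s (d s).

Definition optimal_policy (P : S -> A -> S -> R) (r : qfun) (gamma : R)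
  (mu : S -> A -> R) : Prop :=
  Qval P r gamma mu = Qstar P r gamma.

Definition is_norm (N : qfun -> R) : Prop :=
  (forall f g, N (qadd f g) <= N f + N g) /\
  (forall c f, N (qscale c f) = `|c| * N f) /\
  (forall f, N f = 0 -> f = qzero).

Definition strictly_monotone (N : qfun -> R) : Prop :=
  forall Q Q', qle Q' Q -> qle qzero Q' -> Q <> Q' -> N Q' < N Q.

End MDP.
Arguments detpol {R S A} d _ _.
Arguments qzero {R S A} _ _.

(* Main.v *)
Require Import Defs.
From HB Require Import structures.
From mathcomp Require Import all_boot all_order all_algebra.
From mathcomp Require Import all_classical all_reals all_analysis.
Import Order.TTheory GRing.Theory Num.Theory.
From mathcomp Require Import lra ring.
Import numFieldNormedType.Exports.
Local Open Scope ring_scope.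
Local Open Scope classical_set_scope.
Section RPI.
Variables (R : realType) (S A : finType) (P : S -> A -> S -> R) (r : qfun R S A) (gamma : R).
Hypothesis mdp : is_mdp P gamma.

Lemma P_ge0 s a s' : 0 <= P s a s'. Proof. by case: mdp. Qed.
Lemma P_sum1 s a : \sum_(s' : S) P s a s' = 1. Proof. by case: mdp => _ []. Qed.
Lemma g_ge0 : 0 <= gamma. Proof. by case: mdp => _ [_ []]. Qed.
Lemma g_lt1 : gamma < 1. Proof. by case: mdp => _ [_ []]. Qed.

Lemma Pmu_le mu h c : is_policy mu -> (forall s a, h s a <= c) ->
  forall s a, Pmu P mu h s a <= c.
Proof.
move=> pol hc s a; rewrite /Pmu.
apply: (@le_trans _ _ (\sum_s' P s a s' * c)).
  apply: ler_sum => s' _; apply: ler_wpM2l; first exact: P_ge0.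
  have [m0 m1] := pol s'.
  apply: (@le_trans _ _ (\sum_a' mu s' a' * c)).
    by apply: ler_sum => a' _; exact: ler_wpM2l.
  by rewrite -mulr_suml m1 mul1r.
by rewrite -mulr_suml P_sum1 mul1r.
Qed.

Lemma Pmu_ge mu h c : is_policy mu -> (forall s a, c <= h s a) ->
  forall s a, c <= Pmu P mu h s a.
Proof.
move=> pol hc s a; rewrite /Pmu.
apply: (@le_trans _ _ (\sum_s' P s a s' * c)); last first.
  apply: ler_sum => s' _; apply: ler_wpM2l; first exact: P_ge0.
  have [m0 m1] := pol s'.
  apply: (@le_trans _ _ (\sum_a' mu s' a' * c)).
    by rewrite -mulr_suml m1 mul1r.
  by apply: ler_sum => a' _; exact: ler_wpM2l.
by rewrite -mulr_suml P_sum1 mul1r.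
Qed.

Lemma Pmu_sub mu h h' s a :
  Pmu P mu (fun s a => h s a - h' s a) s a = Pmu P mu h s a - Pmu P mu h' s a.
Proof.
rewrite /Pmu -sumrB; apply: eq_bigr => s' _; rewrite -mulrBr -sumrB.
congr (_ * _); apply: eq_bigr => a' _; by rewrite mulrBr.
Qed.

Lemma Pmu_add mu h h' s a :
  Pmu P mu (fun s a => h s a + h' s a) s a = Pmu P mu h s a + Pmu P mu h' s a.
Proof.
rewrite /Pmu -big_split; apply: eq_bigr => s' _; rewrite /= -mulrDr -big_split.
congr (_ * _); apply: eq_bigr => a' _ /=; by rewrite mulrDr.
Qed.

Lemma Pmu_scale mu c h s a :
  Pmu P mu (fun s a => c * h s a) s a = c * Pmu P mu h s a.
Proof.
rewrite /Pmu mulr_sumr; apply: eq_bigr => s' _ /=.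
rewrite [RHS]mulrCA [in RHS]mulr_sumr.
congr (_ * _); apply: eq_bigr => a' _ /=; by rewrite mulrCA.
Qed.

Lemma Pmu0 mu s a : Pmu P mu (fun _ _ => 0) s a = 0.
Proof.
rewrite /Pmu big1 // => s' _; rewrite big1 ?mulr0 // => a' _; by rewrite mulr0.
Qed.

Lemma Pmu_sumt mu n (F : nat -> qfun R S A) s a :
  Pmu P mu (fun s a => \sum_(t < n) F t s a) s a = \sum_(t < n) Pmu P mu (F t) s a.
Proof.
elim: n => [|n IH].
  have -> : (fun s a => \sum_(t < 0) F t s a) = (fun _ _ => 0) by
    apply/funext => x; apply/funext => y; rewrite big_ord0.
  by rewrite big_ord0 Pmu0.
rewrite big_ord_recr /= -IH -Pmu_add.
have -> : (fun s a => \sum_(t < n.+1) F t s a) = 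
   (fun s a => \sum_(t < n) F t s a + F n s a) by
  apply/funext => x; apply/funext => y; rewrite big_ord_recr.
by [].
Qed.

Lemma Pmu_mono mu h h' : is_policy mu -> qle h h' -> qle (Pmu P mu h) (Pmu P mu h').
Proof.
move=> pol hh s a; rewrite -subr_ge0 -Pmu_sub; apply: Pmu_ge => // x y.
by rewrite subr_ge0.
Qed.

Lemma Tmu_mono mu h h' : is_policy mu -> qle h h' ->
  qle (Tmu P r gamma mu h) (Tmu P r gamma mu h').
Proof.
move=> pol hh s a; rewrite /Tmu lerD2l; apply: ler_wpM2l; first exact: g_ge0.
exact: Pmu_mono.
Qed.

Definition bnd (h : qfun R S A) := \sum_(s : S) \sum_(a : A) `|h s a|.

Lemma bnd_ge h s a : `|h s a| <= bnd h.
Proof.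
rewrite /bnd (bigD1 s) //= (bigD1 a) //= -addrA lerDl addr_ge0 //.
  by apply: sumr_ge0.
by apply: sumr_ge0 => i _; apply: sumr_ge0.
Qed.

Lemma bnd_ge0 h : 0 <= bnd h.
Proof. by apply: sumr_ge0 => i _; apply: sumr_ge0. Qed.

Lemma it_bnd mu : is_policy mu -> forall t s a,
  `|iter t (Pmu P mu) r s a| <= bnd r.
Proof.
move=> pol; elim => [|t IH] s a /=; first exact: bnd_ge.
rewrite ler_norml; apply/andP; split.
  apply: Pmu_ge => // x y; by move: (IH x y); rewrite ler_norml => /andP[].
apply: Pmu_le => // x y; by move: (IH x y); rewrite ler_norml => /andP[].
Qed.


Definition Sn mu n : qfun R S A :=
  fun s a => \sum_(t < n) gamma ^+ t * iter t (Pmu P mu) r s a.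

Lemma Sn_rec mu n s a : Sn mu n.+1 s a = Tmu P r gamma mu (Sn mu n) s a.
Proof.
rewrite /Sn /Tmu big_ord_recl /= expr0 mul1r; congr (_ + _).
rewrite (Pmu_sumt mu n (fun t s a => gamma ^+ t * iter t (Pmu P mu) r s a)).
rewrite mulr_sumr; apply: eq_bigr => t _ /=.
by rewrite Pmu_scale /bump /= exprS mulrA.
Qed.

Lemma Sn0 mu s a : Sn mu 0 s a = 0.
Proof. by rewrite /Sn big_ord0. Qed.

Definition gs n := \sum_(t < n) gamma ^+ t.
Definition K := (1 - gamma)^-1.

Lemma K_eq : K - gamma * K = 1.
Proof.
rewrite /K -{1}(mul1r (1 - gamma)^-1) -mulrBl mulfV //.
by rewrite subr_eq0 eq_sym lt_eqF // g_lt1.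
Qed.

Lemma gs_le n : gs n <= K.
Proof.
elim: n => [|n IH]; first by rewrite /gs big_ord0 /K invr_ge0 subr_ge0 ltW // g_lt1.
rewrite /gs big_ord_recl expr0.
have -> : \sum_(i < n) gamma ^+ bump 0 i = gamma * gs n.
  by rewrite /gs mulr_sumr; apply: eq_bigr => i _; rewrite /bump /= exprS.
apply: (@le_trans _ _ (1 + gamma * K)).
  by rewrite lerD2l; apply: ler_wpM2l => //; exact: g_ge0.
by rewrite -K_eq subrK.
Qed.

Lemma gsS n : gs n.+1 = gs n + gamma ^+ n.
Proof. by rewrite /gs big_ord_recr. Qed.

Lemma Sn_le mu : is_policy mu -> forall n s a, Sn mu n s a <= bnd r * gs n.
Proof.
move=> pol n s a; rewrite /Sn /gs mulr_sumr; apply: ler_sum => t _.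
rewrite mulrC; apply: ler_wpM2r; first by apply: exprn_ge0; exact: g_ge0.
exact: (le_trans (ler_norm _) (it_bnd _ pol _ _ _)).
Qed.

Lemma SnS mu n s a : Sn mu n.+1 s a = Sn mu n s a + gamma ^+ n * iter n (Pmu P mu) r s a.
Proof. by rewrite /Sn big_ord_recr. Qed.

Lemma my_cvg_sum (I : finType) (F : I -> nat -> R) (l : I -> R) :
  (forall i, F i n @[n --> \oo] --> l i) ->
  \sum_(i : I) F i n @[n --> \oo] --> \sum_(i : I) l i.
Proof.
move=> H; apply: cvg_big => //; first exact: add_continuous.
Qed.

Lemma Sn_cvg mu : is_policy mu -> forall s a,
  Sn mu n s a @[n --> \oo] --> Qval P r gamma mu s a.
Proof.
move=> pol s a.
pose u n := Sn mu n s a + bnd r * gs n.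
have ud : nondecreasing_seq u.
  apply/nondecreasing_seqP => n; rewrite /u SnS gsS mulrDr.
  have h : 0 <= gamma ^+ n * (iter n (Pmu P mu) r s a + bnd r).
    apply: mulr_ge0; first by apply: exprn_ge0; exact: g_ge0.
    rewrite -lerBlDr sub0r; move: (it_bnd _ pol n s a); rewrite ler_norml.
    by case/andP.
  rewrite mulrDr in h; rewrite [bnd r * _ ^+ _]mulrC; lra.
have uub : has_ubound (range u).
  exists (bnd r * K + bnd r * K) => _ [n _ <-]; rewrite /u.
  apply: lerD.
    apply: (le_trans (Sn_le _ pol n s a)).
    apply: ler_wpM2l; [exact: bnd_ge0 | exact: gs_le].
  apply: ler_wpM2l; [exact: bnd_ge0 | exact: gs_le].
have gd : nondecreasing_seq gs.
  apply/nondecreasing_seqP => n; rewrite gsS lerDl; apply: exprn_ge0; exact: g_ge0.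
have gub : has_ubound (range gs) by exists K => _ [n _ <-]; exact: gs_le.
have cu := nondecreasing_cvgn ud uub.
have cg := nondecreasing_cvgn gd gub.
have cS : Sn mu n s a @[n --> \oo] --> sup (range u) - bnd r * sup (range gs).
  have -> : (fun n => Sn mu n s a) = (fun n => u n - bnd r * gs n).
    by apply/funext => n; rewrite /u addrK.
  apply: cvgB => //; exact: cvgMl_tmp.
have -> : Qval P r gamma mu s a = sup (range u) - bnd r * sup (range gs).
  by rewrite /Qval; exact: (cvg_lim _ cS).
exact: cS.
Qed.


Lemma T_cvg mu (g : nat -> qfun R S A) (h : qfun R S A) :
  (forall s a, g n s a @[n --> \oo] --> h s a) ->
  forall s a, Tmu P r gamma mu (g n) s a @[n --> \oo] --> Tmu P r gamma mu h s a.
Proof.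
move=> H s a; rewrite /Tmu /Pmu.
apply: cvgD; first exact: cvg_cst.
apply: cvgMl_tmp; apply: my_cvg_sum => s'.
apply: cvgMl_tmp; apply: my_cvg_sum => a'.
apply: cvgMl_tmp; exact: H.
Qed.

Lemma Qfix mu : is_policy mu ->
  Tmu P r gamma mu (Qval P r gamma mu) = Qval P r gamma mu.
Proof.
move=> pol; apply/funext => s; apply/funext => a.
have H1 : Sn mu n.+1 s a @[n --> \oo] --> Qval P r gamma mu s a.
  by rewrite (cvg_shiftS (fun n => Sn mu n s a)); exact: Sn_cvg.
have H2 : Sn mu n.+1 s a @[n --> \oo] --> Tmu P r gamma mu (Qval P r gamma mu) s a.
  under eq_fun do rewrite Sn_rec.
  by apply: T_cvg => x y; exact: Sn_cvg.
exact: (cvg_unique _ H2 H1).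
Qed.

Lemma gpow_cvg : gamma ^+ n @[n --> \oo] --> 0.
Proof.
apply: cvg_expr; rewrite ger0_norm; [exact: g_lt1 | exact: g_ge0].
Qed.

Lemma Qlb mu g : is_policy mu -> qle g (Tmu P r gamma mu g) ->
  qle g (Qval P r gamma mu).
Proof.
move=> pol hg.
have key : forall n s a, g s a - Sn mu n s a <= gamma ^+ n * bnd g.
  elim => [|n IH] s a.
    by rewrite Sn0 subr0 expr0 mul1r; exact: (le_trans (ler_norm _) (bnd_ge _ _ _)).
  rewrite Sn_rec; apply: (@le_trans _ _ (Tmu P r gamma mu g s a - Tmu P r gamma mu (Sn mu n) s a)).
    by rewrite lerD2r.
  rewrite /Tmu opprD addrACA subrr add0r -mulrBr -Pmu_sub exprS -mulrA.
  apply: ler_wpM2l; first exact: g_ge0.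
  by apply: Pmu_le.
move=> s a.
apply: (@ler_cvg_to _ \oo _ _ (fun _ : nat => g s a) (fun n => Sn mu n s a + gamma ^+ n * bnd g)).
- exact: cvg_cst.
- rewrite -[X in _ --> X]addr0; apply: cvgD; first exact: Sn_cvg.
  rewrite -(mul0r (bnd g)); apply: cvgMr_tmp; exact: gpow_cvg.
- by near=> n; rewrite -lerBlDl.
Unshelve. all: by end_near.
Qed.

Lemma Qub mu g : is_policy mu -> qle (Tmu P r gamma mu g) g ->
  qle (Qval P r gamma mu) g.
Proof.
move=> pol hg.
have key : forall n s a, Sn mu n s a - g s a <= gamma ^+ n * bnd g.
  elim => [|n IH] s a.
    rewrite Sn0 sub0r expr0 mul1r; apply: (le_trans _ (bnd_ge g s a)).
    by rewrite -normrN ler_norm.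
  rewrite Sn_rec; apply: (@le_trans _ _ (Tmu P r gamma mu (Sn mu n) s a - Tmu P r gamma mu g s a)).
    by rewrite lerD2l lerN2.
  rewrite /Tmu opprD addrACA subrr add0r -mulrBr -Pmu_sub exprS -mulrA.
  apply: ler_wpM2l; first exact: g_ge0.
  by apply: Pmu_le.
move=> s a.
apply: (@ler_cvg_to _ \oo _ _ (fun n => Sn mu n s a) (fun n => g s a + gamma ^+ n * bnd g)).
- exact: Sn_cvg.
- rewrite -[X in _ --> X]addr0; apply: cvgD; first exact: cvg_cst.
  rewrite -(mul0r (bnd g)); apply: cvgMr_tmp; exact: gpow_cvg.
- by near=> n; rewrite -lerBlDl.
Unshelve. all: by end_near.
Qed.

Lemma Qbound mu : is_policy mu -> qle (Qval P r gamma mu) (fun _ _ => bnd r * K).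
Proof.
move=> pol; apply: Qub => // s a; rewrite /Tmu.
apply: (@le_trans _ _ (bnd r + gamma * (bnd r * K))).
  apply: lerD; first exact: (le_trans (ler_norm _) (bnd_ge _ _ _)).
  apply: ler_wpM2l; first exact: g_ge0.
  by apply: Pmu_le.
have := K_eq; move=> e.
rewrite le_eqVlt; apply/orP; left; apply/eqP.
by rewrite -{1}[bnd r]mulr1 -e; ring.
Qed.

Lemma det_sum d (h : qfun R S A) s : \sum_(a : A) detpol d s a * h s a = h s (d s).
Proof.
rewrite (bigD1 (d s)) //= /detpol eqxx mul1r big1 ?addr0 // => a /negbTE ->.
by rewrite mul0r.
Qed.

Lemma det_policy (d : S -> A) : is_policy (R:=R) (detpol d).
Proof.
move=> s; split; first by move=> a; rewrite /detpol; case: eqP.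
have := det_sum d (fun _ _ => 1) s.
by under eq_bigr do rewrite mulr1.
Qed.

Lemma greedy_ge mu d h : is_policy mu -> greedy d h ->
  qle (Tmu P r gamma mu h) (Tmu P r gamma (detpol d) h).
Proof.
move=> pol gr s a; rewrite /Tmu lerD2l; apply: ler_wpM2l; first exact: g_ge0.
rewrite /Pmu; apply: ler_sum => s' _; apply: ler_wpM2l; first exact: P_ge0.
rewrite det_sum; have [m0 m1] := pol s'.
apply: (@le_trans _ _ (\sum_a' mu s' a' * h s' (d s'))).
  by apply: ler_sum => a' _; apply: ler_wpM2l.
by rewrite -mulr_suml m1 mul1r.
Qed.


Lemma main (N : qfun R S A -> R) (f : nat -> qfun R S A) (mu : nat -> S -> A -> R) :
  is_norm N -> strictly_monotone N ->
  is_policy (mu 0%N) ->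
  qle (f 0%N) (Tmu P r gamma (mu 0%N) (f 0%N)) ->
  (forall k,
     qle (f k.+1) (Tmu P r gamma (mu k) (f k.+1)) /\ qle (f k) (f k.+1) /\
     (forall g, qle g (Tmu P r gamma (mu k) g) -> qle (f k) g ->
        N (qsub g (f k)) <= N (qsub (f k.+1) (f k)))) ->
  (forall k, exists d : S -> A, greedy d (f k.+1) /\ mu k.+1 = detpol d) ->
  (forall k, f k.+1 = Qval P r gamma (mu k)) /\
  (forall s a, f k s a @[k --> \oo] --> Qstar P r gamma s a) /\
  (forall d : S -> A, greedy d (fun s a => limn (fun k => f k s a)) ->
     optimal_policy P r gamma (detpol d)).
Proof.
move=> _ smon pol0 f0 Hk Hd.
have pol : forall k, is_policy (mu k).
  case => // k; have [d [_ ->]] := Hd k; exact: det_policy.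
have step1 : forall k, qle (f k) (Tmu P r gamma (mu k) (f k)).
  case => // k; have [d [gd ed]] := Hd k.
  have [h1 _] := Hk k; move=> s a; apply: (le_trans (h1 s a)); rewrite ed.
  exact: (greedy_ge _ _ _ (pol k) gd s a).
have claim1 : forall k, f k.+1 = Qval P r gamma (mu k).
  move=> k; have [h1 [h2 h3]] := Hk k.
  have Q1 := Qlb _ _ (pol k) h1.
  have Q0 := Qlb _ _ (pol k) (step1 k).
  have QT : qle (Qval P r gamma (mu k)) (Tmu P r gamma (mu k) (Qval P r gamma (mu k))).
    by rewrite Qfix.
  case: (pselect (f k.+1 = Qval P r gamma (mu k))) => // ne.
  have := h3 _ QT Q0.
  have lt : N (qsub (f k.+1) (f k)) < N (qsub (Qval P r gamma (mu k)) (f k)).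
    apply: smon.
    - move=> s a; rewrite /qsub lerD2r; exact: Q1.
    - move=> s a; rewrite /qsub /qzero subr_ge0; exact: h2.
    - move=> e; apply: ne; apply/funext => s; apply/funext => a.
      move/(congr1 (fun F => F s a + f k s a)): e; rewrite /qsub /= !subrK.
      by move=> ->.
  by rewrite leNgt lt.
have fixS : forall k, Tmu P r gamma (mu k) (f k.+1) = f k.+1.
  by move=> k; rewrite claim1 Qfix.
have ub : forall k s a, f k s a <= bnd r * K.
  case => [|k] s a.
    apply: (le_trans ((Hk 0%N).2.1 s a)); rewrite claim1; exact: Qbound.
  rewrite claim1; exact: Qbound.
pose finf : qfun R S A := fun s a => limn (fun k => f k s a).
have nd : forall s a, nondecreasing_seq (fun k => f k s a).
  by move=> s a; apply/nondecreasing_seqP => k; exact: (Hk k).2.1.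
have fcvg : forall s a, f k s a @[k --> \oo] --> finf s a.
  move=> s a.
  have hub : has_ubound (range (fun k => f k s a)).
    by exists (bnd r * K) => _ [k _ <-]; exact: ub.
  have c := nondecreasing_cvgn (nd s a) hub.
  by rewrite /finf (cvg_lim _ c).
have fle : forall k s a, f k s a <= finf s a.
  move=> k s a; exact: (nondecreasing_cvgn_le (nd s a) (cvgP _ (fcvg s a)) k).
have fcvgS : forall s a, f k.+1 s a @[k --> \oo] --> finf s a.
  by move=> s a; rewrite (cvg_shiftS (fun k => f k s a)).
have fcvgSS : forall s a, f k.+2 s a @[k --> \oo] --> finf s a.
  by move=> s a; rewrite (cvg_shiftS (fun k => f k.+1 s a)).
have HA : forall nu, is_policy nu -> qle (Tmu P r gamma nu finf) finf.
  move=> nu pnu s a.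
  apply: (@ler_cvg_to _ \oo _ _ (fun k => Tmu P r gamma nu (f k.+1) s a) (fun _ => finf s a)).
  - exact: (T_cvg _ _ _ fcvgS).
  - exact: cvg_cst.
  - apply: nearW => k /=.
    have [d [gd ed]] := Hd k.
    apply: (le_trans (greedy_ge _ _ _ pnu gd s a)); rewrite -ed.
    apply: (le_trans (Tmu_mono _ _ _ (pol k.+1) (Hk k.+1).2.1 s a)).
    rewrite fixS; exact: fle.
have HB : forall d, greedy d finf -> qle finf (Tmu P r gamma (detpol d) finf).
  move=> d gd s a.
  apply: (@ler_cvg_to _ \oo _ _ (fun k => f k.+2 s a) (fun _ => Tmu P r gamma (detpol d) finf s a)).
  - exact: fcvgSS.
  - exact: cvg_cst.
  - apply: nearW => k /=.
    rewrite -{1}(fixS k.+1).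
    apply: (le_trans (Tmu_mono _ _ _ (pol k.+1) (fle k.+2) s a)).
    exact: (greedy_ge _ _ _ (pol k.+1) gd s a).
have QE : forall s a, Qstar P r gamma s a = finf s a.
  move=> s a; rewrite /Qstar.
  set E := [set y | _].
  have ubE : ubound E (finf s a).
    by move=> y [nu [pnu ->]]; exact: (Qub _ _ pnu (HA nu pnu) s a).
  have neE : E !=set0 by exists (Qval P r gamma (mu 0%N) s a); exists (mu 0%N).
  have hub : has_ubound E by exists (finf s a).
  apply: le_anti; apply/andP; split; first exact: ge_sup.
  apply: (@ler_cvg_to _ \oo _ _ (fun k => f k.+1 s a) (fun _ => sup E)).
  - exact: fcvgS.
  - exact: cvg_cst.
  - apply: nearW => k /=; apply: (ub_le_sup hub).
    by rewrite /E claim1 /=; exists (mu k).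
split; first exact: claim1.
split; first by move=> s a; rewrite QE; exact: fcvg.
move=> d gd; rewrite /optimal_policy; apply/funext => s; apply/funext => a.
rewrite QE; apply: le_anti; apply/andP; split.
- exact: (Qub _ _ (det_policy d) (HA _ (det_policy d)) s a).
- exact: (Qlb _ _ (det_policy d) (HB d gd) s a).
Qed.

End RPI.

Theorem theorem2 (R : realType) (S A : finType)
  (P : S -> A -> S -> R) (r : qfun R S A) (gamma : R)
  (N : qfun R S A -> R)
  (f : nat -> qfun R S A) (mu : nat -> S -> A -> R) :
  is_mdp P gamma ->
  is_norm N -> strictly_monotone N ->
  is_policy (mu 0%N) ->
  qle (f 0%N) (Tmu P r gamma (mu 0%N) (f 0%N)) ->
  (* f_{k+1} in argmax_f ||f - f_k|| s.t. T_{mu_k} f >= f >= f_k *)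
  (forall k,
     qle (f k.+1) (Tmu P r gamma (mu k) (f k.+1)) /\ qle (f k) (f k.+1) /\
     (forall g, qle g (Tmu P r gamma (mu k) g) -> qle (f k) g ->
        N (qsub g (f k)) <= N (qsub (f k.+1) (f k)))) ->
  (* mu_{k+1} deterministic and greedy w.r.t. f_{k+1} *)
  (forall k, exists d : S -> A, greedy d (f k.+1) /\ mu k.+1 = detpol d) ->
  (forall k, f k.+1 = Qval P r gamma (mu k)) /\
  (forall s a, f k s a @[k --> \oo] --> Qstar P r gamma s a) /\
  (forall d : S -> A, greedy d (fun s a => limn (fun k => f k s a)) ->
     optimal_policy P r gamma (detpol d)).
Proof.
move=> mdp; exact: main.
Qed.
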